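(* Let $A,B\subset\mathbb{H}$ be finite sets with $|A|\geq 2$ and $|B|\geq 2$. Then there exists a line $\ell$ in $\mathbb{H}^2$ such that $2\leq|(A\times B)\cap\ell|\leq 5$.
   Context: $\mathbb{H}$ denotes the quaternions. $\mathbb{H}^2$ is regarded as a left vector space over $\mathbb{H}$. A line in $\mathbb{H}^2$ is a set of the form $\{p+\lambda v:\lambda\in\mathbb{H}\}$ with $p,v\in\mathbb{H}^2$, $v\neq 0$, where $\lambda v$ denotes left scalar multiplication. Equivalently, lines are the sets $\{(x,y):x=c\}$ for $c\in\mathbb{H}$ and the sets $\{(x,y): y=xm+c\}$ for $m,c\in\mathbb{H}$. *)

(* Defs.v *)
From Stdlib Require Import Reals List.
Open Scope R_scope.

Record quat : Type := Quat { qr : R; qi : R; qj : R; qk : R }.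

Definition qadd (x y : quat) : quat :=
  Quat (qr x + qr y) (qi x + qi y) (qj x + qj y) (qk x + qk y).

(* Hamilton product: i^2 = j^2 = k^2 = ijk = -1. *)
Definition qmul (x y : quat) : quat :=
  Quat (qr x * qr y - qi x * qi y - qj x * qj y - qk x * qk y)
       (qr x * qi y + qi x * qr y + qj x * qk y - qk x * qj y)
       (qr x * qj y - qi x * qk y + qj x * qr y + qk x * qi y)
       (qr x * qk y + qi x * qj y - qj x * qi y + qk x * qr y).

Definition qzero : quat := Quat 0 0 0 0.

(* H^2 as a left H-vector space. *)
Definition qpt : Type := (quat * quat)%type.

Definition on_line (p v z : qpt) : Prop :=
  exists lam : quat,
    z = (qadd (fst p) (qmul lam (fst v)), qadd (snd p) (qmul lam (snd v))).

Definition is_line (l : qpt -> Prop) : Prop :=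
  exists p v : qpt, v <> (qzero, qzero) /\ forall z, l z <-> on_line p v z.

(* |(A x B) ∩ l| = n, for A, B given as duplicate-free lists. *)
Definition card_grid_line (A B : list quat) (l : qpt -> Prop) (n : nat) : Prop :=
  exists L : list qpt, NoDup L /\ length L = n /\
    forall z : qpt, In z L <-> (In (fst z) A /\ In (snd z) B /\ l z).

(* Main.v *)
Require Import Defs.
From Stdlib Require Import Reals List Lra Lia Classical.
Open Scope R_scope.

Definition det3 a b c d e f g h i := a*(e*i-f*h) - b*(d*i-f*g) + c*(d*h-e*g).
Definition det4 a11 a12 a13 a14 a21 a22 a23 a24 a31 a32 a33 a34 a41 a42 a43 a44 :=
  a11 * det3 a22 a23 a24 a32 a33 a34 a42 a43 a44
 - a12 * det3 a21 a23 a24 a31 a33 a34 a41 a43 a44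
 + a13 * det3 a21 a22 a24 a31 a32 a34 a41 a42 a44
 - a14 * det3 a21 a22 a23 a31 a32 a33 a41 a42 a43.

Definition qsub (x y : quat) : quat :=
  Quat (qr x - qr y) (qi x - qi y) (qj x - qj y) (qk x - qk y).
Definition nrm (x : quat) : R := qr x * qr x + qi x * qi x + qj x * qj x + qk x * qk x.
Definition dot (x y : quat) : R := qr x * qr y + qi x * qi y + qj x * qj y + qk x * qk y.
Definition det4q (a b c e : quat) : R :=
  det4 (qr a) (qi a) (qj a) (qk a) (qr b) (qi b) (qj b) (qk b)
       (qr c) (qi c) (qj c) (qk c) (qr e) (qi e) (qj e) (qk e).

Lemma cbq a b c e : (det4q a b c e)^2 =
  det4 (dot a a) (dot a b) (dot a c) (dot a e)
       (dot b a) (dot b b) (dot b c) (dot b e)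
       (dot c a) (dot c b) (dot c c) (dot c e)
       (dot e a) (dot e b) (dot e c) (dot e e).
Proof. destruct a, b, c, e; unfold det4q, det4, det3, dot; simpl; ring. Qed.

Lemma depdot u1 u2 u3 u4 u5 w :
  det4q u2 u3 u4 u5 * dot u1 w + (- det4q u1 u3 u4 u5) * dot u2 w
  + det4q u1 u2 u4 u5 * dot u3 w + (- det4q u1 u2 u3 u5) * dot u4 w
  + det4q u1 u2 u3 u4 * dot u5 w = 0.
Proof. destruct u1, u2, u3, u4, u5, w; unfold det4q, det4, det3, dot; simpl; ring. Qed.
Lemma six_pts (p0 p1 p2 p3 p4 p5 : quat) (d : R) (Hd : 0 < d)
  (H01 : nrm (qsub p0 p1) = d) (H02 : nrm (qsub p0 p2) = d) (H03 : nrm (qsub p0 p3) = d) (H04 : nrm (qsub p0 p4) = d) (H05 : nrm (qsub p0 p5) = d) (H12 : nrm (qsub p1 p2) = d) (H13 : nrm (qsub p1 p3) = d) (H14 : nrm (qsub p1 p4) = d) (H15 : nrm (qsub p1 p5) = d) (H23 : nrm (qsub p2 p3) = d) (H24 : nrm (qsub p2 p4) = d) (H25 : nrm (qsub p2 p5) = d) (H34 : nrm (qsub p3 p4) = d) (H35 : nrm (qsub p3 p5) = d) (H45 : nrm (qsub p4 p5) = d) : False.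
Proof.
  assert (D11 : dot (qsub p1 p0) (qsub p1 p0) = d) by (rewrite <- H01; destruct p0, p1; unfold dot, nrm, qsub; simpl; ring).
  assert (D12 : dot (qsub p1 p0) (qsub p2 p0) = d/2) by (assert (E : dot (qsub p1 p0) (qsub p2 p0) = (nrm (qsub p0 p1) + nrm (qsub p0 p2) - nrm (qsub p1 p2))/2) by (destruct p0, p1, p2; unfold dot, nrm, qsub; simpl; field); rewrite E, H01, H02, H12; field).
  assert (D13 : dot (qsub p1 p0) (qsub p3 p0) = d/2) by (assert (E : dot (qsub p1 p0) (qsub p3 p0) = (nrm (qsub p0 p1) + nrm (qsub p0 p3) - nrm (qsub p1 p3))/2) by (destruct p0, p1, p3; unfold dot, nrm, qsub; simpl; field); rewrite E, H01, H03, H13; field).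
  assert (D14 : dot (qsub p1 p0) (qsub p4 p0) = d/2) by (assert (E : dot (qsub p1 p0) (qsub p4 p0) = (nrm (qsub p0 p1) + nrm (qsub p0 p4) - nrm (qsub p1 p4))/2) by (destruct p0, p1, p4; unfold dot, nrm, qsub; simpl; field); rewrite E, H01, H04, H14; field).
  assert (D15 : dot (qsub p1 p0) (qsub p5 p0) = d/2) by (assert (E : dot (qsub p1 p0) (qsub p5 p0) = (nrm (qsub p0 p1) + nrm (qsub p0 p5) - nrm (qsub p1 p5))/2) by (destruct p0, p1, p5; unfold dot, nrm, qsub; simpl; field); rewrite E, H01, H05, H15; field).
  assert (D21 : dot (qsub p2 p0) (qsub p1 p0) = d/2) by (assert (E : dot (qsub p2 p0) (qsub p1 p0) = (nrm (qsub p0 p2) + nrm (qsub p0 p1) - nrm (qsub p1 p2))/2) by (destruct p0, p2, p1; unfold dot, nrm, qsub; simpl; field); rewrite E, H02, H01, H12; field).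
  assert (D22 : dot (qsub p2 p0) (qsub p2 p0) = d) by (rewrite <- H02; destruct p0, p2; unfold dot, nrm, qsub; simpl; ring).
  assert (D23 : dot (qsub p2 p0) (qsub p3 p0) = d/2) by (assert (E : dot (qsub p2 p0) (qsub p3 p0) = (nrm (qsub p0 p2) + nrm (qsub p0 p3) - nrm (qsub p2 p3))/2) by (destruct p0, p2, p3; unfold dot, nrm, qsub; simpl; field); rewrite E, H02, H03, H23; field).
  assert (D24 : dot (qsub p2 p0) (qsub p4 p0) = d/2) by (assert (E : dot (qsub p2 p0) (qsub p4 p0) = (nrm (qsub p0 p2) + nrm (qsub p0 p4) - nrm (qsub p2 p4))/2) by (destruct p0, p2, p4; unfold dot, nrm, qsub; simpl; field); rewrite E, H02, H04, H24; field).
  assert (D25 : dot (qsub p2 p0) (qsub p5 p0) = d/2) by (assert (E : dot (qsub p2 p0) (qsub p5 p0) = (nrm (qsub p0 p2) + nrm (qsub p0 p5) - nrm (qsub p2 p5))/2) by (destruct p0, p2, p5; unfold dot, nrm, qsub; simpl; field); rewrite E, H02, H05, H25; field).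
  assert (D31 : dot (qsub p3 p0) (qsub p1 p0) = d/2) by (assert (E : dot (qsub p3 p0) (qsub p1 p0) = (nrm (qsub p0 p3) + nrm (qsub p0 p1) - nrm (qsub p1 p3))/2) by (destruct p0, p3, p1; unfold dot, nrm, qsub; simpl; field); rewrite E, H03, H01, H13; field).
  assert (D32 : dot (qsub p3 p0) (qsub p2 p0) = d/2) by (assert (E : dot (qsub p3 p0) (qsub p2 p0) = (nrm (qsub p0 p3) + nrm (qsub p0 p2) - nrm (qsub p2 p3))/2) by (destruct p0, p3, p2; unfold dot, nrm, qsub; simpl; field); rewrite E, H03, H02, H23; field).
  assert (D33 : dot (qsub p3 p0) (qsub p3 p0) = d) by (rewrite <- H03; destruct p0, p3; unfold dot, nrm, qsub; simpl; ring).
  assert (D34 : dot (qsub p3 p0) (qsub p4 p0) = d/2) by (assert (E : dot (qsub p3 p0) (qsub p4 p0) = (nrm (qsub p0 p3) + nrm (qsub p0 p4) - nrm (qsub p3 p4))/2) by (destruct p0, p3, p4; unfold dot, nrm, qsub; simpl; field); rewrite E, H03, H04, H34; field).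
  assert (D35 : dot (qsub p3 p0) (qsub p5 p0) = d/2) by (assert (E : dot (qsub p3 p0) (qsub p5 p0) = (nrm (qsub p0 p3) + nrm (qsub p0 p5) - nrm (qsub p3 p5))/2) by (destruct p0, p3, p5; unfold dot, nrm, qsub; simpl; field); rewrite E, H03, H05, H35; field).
  assert (D41 : dot (qsub p4 p0) (qsub p1 p0) = d/2) by (assert (E : dot (qsub p4 p0) (qsub p1 p0) = (nrm (qsub p0 p4) + nrm (qsub p0 p1) - nrm (qsub p1 p4))/2) by (destruct p0, p4, p1; unfold dot, nrm, qsub; simpl; field); rewrite E, H04, H01, H14; field).
  assert (D42 : dot (qsub p4 p0) (qsub p2 p0) = d/2) by (assert (E : dot (qsub p4 p0) (qsub p2 p0) = (nrm (qsub p0 p4) + nrm (qsub p0 p2) - nrm (qsub p2 p4))/2) by (destruct p0, p4, p2; unfold dot, nrm, qsub; simpl; field); rewrite E, H04, H02, H24; field).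
  assert (D43 : dot (qsub p4 p0) (qsub p3 p0) = d/2) by (assert (E : dot (qsub p4 p0) (qsub p3 p0) = (nrm (qsub p0 p4) + nrm (qsub p0 p3) - nrm (qsub p3 p4))/2) by (destruct p0, p4, p3; unfold dot, nrm, qsub; simpl; field); rewrite E, H04, H03, H34; field).
  assert (D44 : dot (qsub p4 p0) (qsub p4 p0) = d) by (rewrite <- H04; destruct p0, p4; unfold dot, nrm, qsub; simpl; ring).
  assert (D45 : dot (qsub p4 p0) (qsub p5 p0) = d/2) by (assert (E : dot (qsub p4 p0) (qsub p5 p0) = (nrm (qsub p0 p4) + nrm (qsub p0 p5) - nrm (qsub p4 p5))/2) by (destruct p0, p4, p5; unfold dot, nrm, qsub; simpl; field); rewrite E, H04, H05, H45; field).
  assert (D51 : dot (qsub p5 p0) (qsub p1 p0) = d/2) by (assert (E : dot (qsub p5 p0) (qsub p1 p0) = (nrm (qsub p0 p5) + nrm (qsub p0 p1) - nrm (qsub p1 p5))/2) by (destruct p0, p5, p1; unfold dot, nrm, qsub; simpl; field); rewrite E, H05, H01, H15; field).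
  assert (D52 : dot (qsub p5 p0) (qsub p2 p0) = d/2) by (assert (E : dot (qsub p5 p0) (qsub p2 p0) = (nrm (qsub p0 p5) + nrm (qsub p0 p2) - nrm (qsub p2 p5))/2) by (destruct p0, p5, p2; unfold dot, nrm, qsub; simpl; field); rewrite E, H05, H02, H25; field).
  assert (D53 : dot (qsub p5 p0) (qsub p3 p0) = d/2) by (assert (E : dot (qsub p5 p0) (qsub p3 p0) = (nrm (qsub p0 p5) + nrm (qsub p0 p3) - nrm (qsub p3 p5))/2) by (destruct p0, p5, p3; unfold dot, nrm, qsub; simpl; field); rewrite E, H05, H03, H35; field).
  assert (D54 : dot (qsub p5 p0) (qsub p4 p0) = d/2) by (assert (E : dot (qsub p5 p0) (qsub p4 p0) = (nrm (qsub p0 p5) + nrm (qsub p0 p4) - nrm (qsub p4 p5))/2) by (destruct p0, p5, p4; unfold dot, nrm, qsub; simpl; field); rewrite E, H05, H04, H45; field).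
  assert (D55 : dot (qsub p5 p0) (qsub p5 p0) = d) by (rewrite <- H05; destruct p0, p5; unfold dot, nrm, qsub; simpl; ring).
  set (u1 := qsub p1 p0) in *. set (u2 := qsub p2 p0) in *. set (u3 := qsub p3 p0) in *.
  set (u4 := qsub p4 p0) in *. set (u5 := qsub p5 p0) in *.
  assert (Hsq : (det4q u1 u2 u3 u4)^2 = 5 * d^4 / 16).
  { rewrite cbq. rewrite D11, D12, D13, D14, D21, D22, D23, D24, D31, D32, D33, D34, D41, D42, D43, D44.
    unfold det4, det3. field. }
  set (c1 := det4q u2 u3 u4 u5). set (c2 := - det4q u1 u3 u4 u5).
  set (c3 := det4q u1 u2 u4 u5). set (c4 := - det4q u1 u2 u3 u5).
  set (c5 := det4q u1 u2 u3 u4).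
  set (Ss := c1 + c2 + c3 + c4 + c5).
  assert (E1 : c1 + Ss = 0).
  { assert (Z : c1 * dot u1 u1 + c2 * dot u2 u1 + c3 * dot u3 u1 + c4 * dot u4 u1 + c5 * dot u5 u1 = 0) by (unfold c1, c2, c3, c4, c5; apply depdot).
    rewrite D11, D21, D31, D41, D51 in Z.
    assert (Z' : (d/2) * (c1 + Ss) = 0) by (rewrite <- Z; unfold Ss; field).
    apply Rmult_integral in Z'. destruct Z' as [Z'|Z']; [lra|exact Z']. }
  assert (E2 : c2 + Ss = 0).
  { assert (Z : c1 * dot u1 u2 + c2 * dot u2 u2 + c3 * dot u3 u2 + c4 * dot u4 u2 + c5 * dot u5 u2 = 0) by (unfold c1, c2, c3, c4, c5; apply depdot).
    rewrite D12, D22, D32, D42, D52 in Z.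
    assert (Z' : (d/2) * (c2 + Ss) = 0) by (rewrite <- Z; unfold Ss; field).
    apply Rmult_integral in Z'. destruct Z' as [Z'|Z']; [lra|exact Z']. }
  assert (E3 : c3 + Ss = 0).
  { assert (Z : c1 * dot u1 u3 + c2 * dot u2 u3 + c3 * dot u3 u3 + c4 * dot u4 u3 + c5 * dot u5 u3 = 0) by (unfold c1, c2, c3, c4, c5; apply depdot).
    rewrite D13, D23, D33, D43, D53 in Z.
    assert (Z' : (d/2) * (c3 + Ss) = 0) by (rewrite <- Z; unfold Ss; field).
    apply Rmult_integral in Z'. destruct Z' as [Z'|Z']; [lra|exact Z']. }
  assert (E4 : c4 + Ss = 0).
  { assert (Z : c1 * dot u1 u4 + c2 * dot u2 u4 + c3 * dot u3 u4 + c4 * dot u4 u4 + c5 * dot u5 u4 = 0) by (unfold c1, c2, c3, c4, c5; apply depdot).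
    rewrite D14, D24, D34, D44, D54 in Z.
    assert (Z' : (d/2) * (c4 + Ss) = 0) by (rewrite <- Z; unfold Ss; field).
    apply Rmult_integral in Z'. destruct Z' as [Z'|Z']; [lra|exact Z']. }
  assert (E5 : c5 + Ss = 0).
  { assert (Z : c1 * dot u1 u5 + c2 * dot u2 u5 + c3 * dot u3 u5 + c4 * dot u4 u5 + c5 * dot u5 u5 = 0) by (unfold c1, c2, c3, c4, c5; apply depdot).
    rewrite D15, D25, D35, D45, D55 in Z.
    assert (Z' : (d/2) * (c5 + Ss) = 0) by (rewrite <- Z; unfold Ss; field).
    apply Rmult_integral in Z'. destruct Z' as [Z'|Z']; [lra|exact Z']. }
  assert (c5 = 0) by (unfold Ss in *; lra).
  unfold c5 in *. rewrite H in Hsq. 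
  assert (0 < d^4) by (apply pow_lt; lra). simpl in Hsq. lra.
Qed.
Lemma quat_ext (x y : quat) : qr x = qr y -> qi x = qi y -> qj x = qj y -> qk x = qk y -> x = y.
Proof. destruct x, y; simpl; intros; subst; reflexivity. Qed.

Lemma nrm0_eq x y : nrm (qsub x y) = 0 -> x = y.
Proof.
  destruct x as [a b c e], y as [a' b' c' e']; unfold nrm, qsub; simpl; intro H.
  pose proof (Rle_0_sqr (a - a')). pose proof (Rle_0_sqr (b - b')).
  pose proof (Rle_0_sqr (c - c')). pose proof (Rle_0_sqr (e - e')). unfold Rsqr in *.
  assert (Z1 : (a - a') * (a - a') = 0) by lra. assert (Z2 : (b - b') * (b - b') = 0) by lra.
  assert (Z3 : (c - c') * (c - c') = 0) by lra. assert (Z4 : (e - e') * (e - e') = 0) by lra.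
  apply Rmult_integral in Z1, Z2, Z3, Z4.
  f_equal; lra.
Qed.

Lemma nrm_ge0 x : 0 <= nrm x.
Proof. unfold nrm. pose proof (Rle_0_sqr (qr x)). pose proof (Rle_0_sqr (qi x)).
  pose proof (Rle_0_sqr (qj x)). pose proof (Rle_0_sqr (qk x)). unfold Rsqr in *. lra. Qed.

Lemma nrm_pos x y : x <> y -> 0 < nrm (qsub x y).
Proof.
  intro H. destruct (Rle_lt_dec (nrm (qsub x y)) 0) as [h|h]; [|exact h].
  exfalso. apply H. apply nrm0_eq. pose proof (nrm_ge0 (qsub x y)). lra.
Qed.

Lemma nrm_line a l l' u :
  nrm (qsub (qadd a (qmul l u)) (qadd a (qmul l' u))) = nrm (qsub l l') * nrm u.
Proof. destruct a, l, l', u; unfold nrm, qsub, qadd, qmul; simpl; ring. Qed.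

Lemma nrm_sym x y : nrm (qsub x y) = nrm (qsub y x).
Proof. destruct x, y; unfold nrm, qsub; simpl; ring. Qed.

Lemma enum_ex {T : Type} (l : list T) (P : T -> Prop) :
  exists L, NoDup L /\ forall z, In z L <-> In z l /\ P z.
Proof.
  induction l as [|a l IH].
  - exists nil. split; [constructor|]. simpl; tauto.
  - destruct IH as [L [HL HI]].
    destruct (classic (P a /\ ~ In a L)) as [H|H].
    + exists (a :: L). split; [constructor; tauto|].
      intro z; simpl. rewrite HI. split.
      * intros [<-|h]; tauto.
      * intros [[<-|h] hp]; [left; reflexivity|right; tauto].
    + exists L. split; [exact HL|]. intro z. rewrite HI. simpl. split.
      * tauto.
      * intros [[<-|h] hp]; [|tauto]. split; [|exact hp].
        destruct (classic (In a L)) as [h|h]; [rewrite HI in h; tauto|exfalso; tauto].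
Qed.

Lemma min_ex {T : Type} (f : T -> R) (P : T -> Prop) (l : list T) :
  (exists t, In t l /\ P t) ->
  exists t, In t l /\ P t /\ forall s, In s l -> P s -> f t <= f s.
Proof.
  induction l as [|a l IH]; intros [t [Ht Pt]]; [destruct Ht|].
  destruct (classic (exists t, In t l /\ P t)) as [H|H].
  - destruct (IH H) as [m [Hm [Pm Hmin]]].
    destruct (classic (P a /\ f a <= f m)) as [Ha|Ha].
    + exists a. split; [left; reflexivity|split; [tauto|]].
      intros s [<-|hs] ps; [lra|]. specialize (Hmin s hs ps). lra.
    + exists m. split; [right; exact Hm|split; [exact Pm|]].
      intros s [<-|hs] ps; [|auto]. 
      destruct (Rle_lt_dec (f m) (f a)); [auto|exfalso; apply Ha; split; [exact ps|lra]].
  - destruct Ht as [<-|Ht]; [|exfalso; apply H; eauto].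
    exists a. split; [left; reflexivity|split; [exact Pt|]].
    intros s [<-|hs] ps; [lra|exfalso; apply H; eauto].
Qed.

Lemma six_list (P : quat -> Prop) d : 0 < d ->
  (forall x y, P x -> P y -> x <> y -> nrm (qsub x y) = d) ->
  forall l, NoDup l -> (forall x, In x l -> P x) -> (length l <= 5)%nat.
Proof.
  intros Hd HP l Hl Hin.
  destruct l as [|p0 [|p1 [|p2 [|p3 [|p4 [|p5 r]]]]]]; simpl; try lia.
  exfalso.
  assert (Q : forall x, In x (p0 :: p1 :: p2 :: p3 :: p4 :: p5 :: r) -> P x) by exact Hin.
  assert (P0 : P p0) by (apply Q; simpl; tauto).
  assert (P1 : P p1) by (apply Q; simpl; tauto).
  assert (P2 : P p2) by (apply Q; simpl; tauto).
  assert (P3 : P p3) by (apply Q; simpl; tauto).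
  assert (P4 : P p4) by (apply Q; simpl; tauto).
  assert (P5 : P p5) by (apply Q; simpl; tauto).
  apply NoDup_cons_iff in Hl as [N0 Hl].
  apply NoDup_cons_iff in Hl as [N1 Hl].
  apply NoDup_cons_iff in Hl as [N2 Hl].
  apply NoDup_cons_iff in Hl as [N3 Hl].
  apply NoDup_cons_iff in Hl as [N4 Hl].
  simpl in N0, N1, N2, N3, N4.
  apply (six_pts p0 p1 p2 p3 p4 p5 d Hd); apply HP; auto; intro E; subst; tauto.
Qed.

Lemma NoDup_map_on {A B : Type} (f : A -> B) (l : list A) :
  (forall x y, In x l -> In y l -> f x = f y -> x = y) -> NoDup l -> NoDup (map f l).
Proof.
  induction l as [|a l IH]; intros Hi Hn; simpl; [constructor|].
  apply NoDup_cons_iff in Hn as [Ha Hn]. constructor.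
  - intro H. apply in_map_iff in H as [x [Hx Hxl]].
    assert (x = a) by (apply Hi; simpl; auto). subst; tauto.
  - apply IH; auto. intros; apply Hi; simpl; auto.
Qed.

Lemma two_le {T : Type} (L : list T) x y : In x L -> In y L -> x <> y -> (2 <= length L)%nat.
Proof.
  destruct L as [|a [|b r]]; simpl; try lia; intros; try tauto.
  destruct H as [<-|[]]; destruct H0 as [<-|[]]; tauto.
Qed.

Theorem theorem4 (A B : list quat) :
  NoDup A -> NoDup B -> (2 <= length A)%nat -> (2 <= length B)%nat ->
  exists (l : qpt -> Prop) (n : nat),
    is_line l /\ card_grid_line A B l n /\ (2 <= n <= 5)%nat.
Proof.
  intros NA NB LA LB.
  assert (exA : exists t, In t (list_prod A A) /\ fst t <> snd t).
  { destruct A as [|x [|y r]]; simpl in LA; try lia.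
    exists (x, y). split; [apply in_prod; simpl; auto|].
    simpl. apply NoDup_cons_iff in NA as [h _]. intro E; subst; simpl in h; tauto. }
  assert (exB : exists t, In t (list_prod B B) /\ fst t <> snd t).
  { destruct B as [|x [|y r]]; simpl in LB; try lia.
    exists (x, y). split; [apply in_prod; simpl; auto|].
    simpl. apply NoDup_cons_iff in NB as [h _]. intro E; subst; simpl in h; tauto. }
  destruct (min_ex (fun t => nrm (qsub (fst t) (snd t))) _ _ exA) as [[a1 a2] [Ha [Da Hamin]]].
  destruct (min_ex (fun t => - nrm (qsub (fst t) (snd t))) _ _ exB) as [[b1 b2] [Hb [Db Hbmax]]].
  simpl in Da, Db, Hamin, Hbmax.
  apply in_prod_iff in Ha as [Ha1 Ha2]. apply in_prod_iff in Hb as [Hb1 Hb2].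
  set (u := qsub a1 a2). set (w := qsub b1 b2).
  set (d := nrm u). set (D := nrm w).
  assert (Hd : 0 < d) by (apply nrm_pos; exact Da).
  assert (HD : 0 < D) by (apply nrm_pos; exact Db).
  assert (Amin : forall x y, In x A -> In y A -> x <> y -> d <= nrm (qsub x y)).
  { intros x y hx hy hxy. apply (Hamin (x, y)); [apply in_prod; auto|exact hxy]. }
  assert (Bmax : forall x y, In x B -> In y B -> nrm (qsub x y) <= D).
  { intros x y hx hy. destruct (classic (x = y)) as [<-|hxy].
    - assert (E : nrm (qsub x x) = 0) by (destruct x; unfold nrm, qsub; simpl; ring).
      rewrite E; lra.
    - assert (h := Hbmax (x, y) ltac:(apply in_prod; auto) hxy). simpl in h. unfold D, w. lra. }
  set (p := (a2, b2) : qpt). set (v := (u, w) : qpt).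
  set (l := on_line p v).
  destruct (enum_ex (list_prod A B) l) as [L [NL HL]].
  assert (HL' : forall z, In z L <-> In (fst z) A /\ In (snd z) B /\ l z).
  { intros [x y]. rewrite HL, in_prod_iff. simpl. tauto. }
  assert (key : forall z z', In z L -> In z' L -> z <> z' ->
            fst z <> fst z' /\ nrm (qsub (fst z) (fst z')) = d).
  { intros z z' hz hz' hzz.
    apply HL' in hz as [hx [hy [lam hlam]]]. apply HL' in hz' as [hx' [hy' [lam' hlam']]].
    subst z z'. simpl in *.
    assert (EX := nrm_line a2 lam lam' u). assert (EY := nrm_line b2 lam lam' w).
    fold d in EX. fold D in EY.
    pose proof (nrm_ge0 (qsub lam lam')) as Hge.
    assert (Hne : qadd a2 (qmul lam u) <> qadd a2 (qmul lam' u)).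
    { intro E. apply hzz. rewrite E in EX.
      assert (E0 : nrm (qsub (qadd a2 (qmul lam' u)) (qadd a2 (qmul lam' u))) = 0)
        by (destruct (qadd a2 (qmul lam' u)); unfold nrm, qsub; simpl; ring).
      rewrite E0 in EX.
      assert (Z : nrm (qsub lam lam') = 0) by nra.
      apply nrm0_eq in Z. subst lam'. reflexivity. }
    split; [exact Hne|].
    assert (h1 := Amin _ _ hx hx' Hne).
    assert (h2 := Bmax _ _ hy hy').
    rewrite EX in h1 |- *. rewrite EY in h2.
    assert (nrm (qsub lam lam') = 1) by nra.
    rewrite H; ring. }
  assert (in1 : In (a1, b1) L).
  { apply HL'. simpl. split; [auto|split; [auto|]].
    exists (Quat 1 0 0 0). unfold p, v, u, w; simpl. f_equal;
    apply quat_ext; destruct a1, a2, b1, b2; unfold qadd, qmul, qsub; simpl; ring. }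
  assert (in2 : In (a2, b2) L).
  { apply HL'. simpl. split; [auto|split; [auto|]].
    exists qzero. unfold p, v, u, w; simpl. f_equal;
    apply quat_ext; destruct a1, a2, b1, b2; unfold qadd, qmul, qsub, qzero; simpl; ring. }
  exists l, (length L). split; [|split].
  - exists p, v. split; [|intro; unfold l; tauto].
    unfold v. intro E. assert (E1 : u = qzero) by (change u with (fst (u, w)); rewrite E; reflexivity).
    apply Da. apply nrm0_eq. fold u. rewrite E1. unfold nrm, qzero; simpl; ring.
  - exists L. split; [exact NL|split; [reflexivity|exact HL']].
  - split.
    + apply (two_le L _ _ in1 in2). intro E; injection E as E1 E2. tauto.
    + rewrite <- (length_map fst L).
      apply (six_list (fun x => In x (map fst L)) d Hd).
      * intros x y hx hy hxy. apply in_map_iff in hx as [z [<- hz]].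
        apply in_map_iff in hy as [z' [<- hz']].
        apply (key z z' hz hz'). intro E; subst; tauto.
      * apply NoDup_map_on; [|exact NL].
        intros z z' hz hz' E. destruct (classic (z = z')) as [h|h]; [exact h|].
        exfalso. apply (key z z' hz hz' h). exact E.
      * auto.
Qed.
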